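(* Let $N\in\{2,3\}$. If $z\in C^2(\mathbb{R})$ satisfies $$-z''(t)+(N-4)z'(t)+(2N-4)z(t)=\frac{N-1}{2}\,z(t)^2\qquad (t\in\mathbb{R})$$ and $\lim_{t\to-\infty}e^tz(t)=0=\lim_{t\to+\infty}e^tz(t)$, then $z\equiv0$. *)

(* Defs.v *)
From Stdlib Require Import Reals.
From Coquelicot Require Import Coquelicot.
Open Scope R_scope.

Definition C2 (z : R -> R) : Prop :=
  (forall t, ex_derive z t) /\
  (forall t, ex_derive (Derive z) t) /\
  (forall t, continuous (Derive (Derive z)) t).

(* Main.v *)
Require Import Defs.
From Stdlib Require Import Reals Lra Psatz.
From Coquelicot Require Import Coquelicot.
Open Scope R_scope.

Lemma mono (f df : R -> R) a b : a <= b ->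
  (forall x, a <= x <= b -> is_derive f x (df x)) ->
  (forall x, a <= x <= b -> 0 <= df x) -> f a <= f b.
Proof.
intros Hab Hd Hp.
destruct (MVT_gen f a b df) as [c [Hc Hfc]].
- intros x Hx. rewrite Rmin_left in Hx by lra. rewrite Rmax_right in Hx by lra.
  apply Hd; lra.
- intros x Hx. rewrite Rmin_left in Hx by lra. rewrite Rmax_right in Hx by lra.
  apply continuity_pt_filterlim. apply (ex_derive_continuous (K:=R_AbsRing) (V:=R_NormedModule)).
  eexists; apply Hd; lra.
- rewrite Rmin_left in Hc by lra. rewrite Rmax_right in Hc by lra.
  assert (0 <= df c) by (apply Hp; lra). nra.
Qed.

Section S.
Variable z : R -> R.
Variable n : R.
Hypothesis dz : forall t, is_derive z t (Derive z t).
Hypothesis dz1 : forall t, is_derive (Derive z) t (Derive (Derive z) t).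
Hypothesis E : forall t, Derive (Derive z) t = (n-4) * Derive z t + (2*n-4) * z t - (n-1)/2 * z t ^2.


Ltac ad := auto_derive; [repeat first [exact I | apply conj | (eexists; exact (dz _)) | (eexists; exact (dz1 _))] |
  try change (fun x => Derive z x) with (Derive z); try change (fun x => z x) with z; rewrite ?E ].

Lemma dW t : is_derive (fun t => exp(2*t) * (- Derive z t + (n-2) * z t)) t
   (exp (2*t) * ((n-1)/2 * z t ^ 2)).
Proof. ad. ring. Qed.

Lemma dV t : is_derive (fun t => exp(-(n-2)*t) * z t) t
   (exp(-(n-2)*t) * (Derive z t - (n-2) * z t)).
Proof. ad. ring. Qed.

Lemma dU t : is_derive (fun t => - exp(-(n-2)*t) * (Derive z t + 2 * z t)) t
   (exp(-(n-2)*t) * ((n-1)/2 * z t ^ 2)).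
Proof. ad. ring. Qed.

Lemma dY t : is_derive (fun t => exp(2*t) * z t) t
   (exp(2*t) * (Derive z t + 2 * z t)).
Proof. ad. ring. Qed.

Lemma dQ t : n = 3 -> is_derive (fun t => exp t * (3 * Derive z t ^ 2 + 2 * z t * Derive z t - 6 * z t ^ 2 + 2 * z t ^ 3)) t
   (- exp t * (Derive z t ^ 2 + 2 * z t ^ 2)).
Proof. intros Hn. ad. rewrite Hn. field. Qed.

Hypothesis Hn : 2 <= n <= 3.
Hypothesis Lm : exists M, forall t, t < M -> Rabs (exp t * z t) < 1.
Hypothesis Lp : exists M, forall t, M < t -> Rabs (exp t * z t) < 1.

Let W t := exp(2*t) * (- Derive z t + (n-2) * z t).
Let U t := - exp(-(n-2)*t) * (Derive z t + 2 * z t).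
Let V t := exp(-(n-2)*t) * z t.

Lemma exp_le1 x : x <= 0 -> exp x <= 1.
Proof. intros h. rewrite <- exp_0. destruct (Rle_lt_or_eq_dec _ _ h) as [h'|h'].
 left; apply exp_increasing; auto. rewrite h'; lra. Qed.

Lemma W_mono a b : a <= b -> W a <= W b.
Proof.
intros h. apply (mono W (fun t => exp (2*t) * ((n-1)/2 * z t ^ 2))); auto.
- intros; apply dW.
- intros. pose proof (exp_pos (2*x)). assert (0 <= z x ^2) by (apply pow2_ge_0).
  apply Rmult_le_pos; [lra|]. apply Rmult_le_pos; lra.
Qed.

Lemma U_mono a b : a <= b -> U a <= U b.
Proof.
intros h. apply (mono U (fun t => exp (-(n-2)*t) * ((n-1)/2 * z t ^ 2))); auto.
- intros; apply dU.
- intros. pose proof (exp_pos (-(n-2)*x)). assert (0 <= z x ^2) by (apply pow2_ge_0).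
  apply Rmult_le_pos; [lra|]. apply Rmult_le_pos; lra.
Qed.

Lemma W_nonneg t0 : 0 <= W t0.
Proof.
destruct (Rle_or_lt 0 (W t0)) as [h|h]; [exact h|exfalso].
set (c := - W t0).
set (H := fun t => exp(-(n-2)*t) * z t + c * exp(-n*t) / n).
assert (HH : forall t, t <= t0 -> H t <= H t0).
{ intros t ht. apply (mono H (fun t => exp(-n*t) * (- W t - c))); auto.
  - intros x _. unfold H, W. ad.
    replace (exp (-(n-2)*x)) with (exp (-n*x) * exp (2*x)) by (rewrite <- exp_plus; f_equal; ring).
    field. lra.
  - intros x hx. pose proof (W_mono x t0 (proj2 hx)). pose proof (exp_pos (-n*x)).
    apply Rmult_le_pos; unfold c; lra. }
destruct Lm as [M HM].
set (H0 := H t0).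
set (A := n * (Rabs H0 + 1) / c).
set (t := Rmin (Rmin (M-1) t0) (Rmin 0 (-A))).
assert (tM : t <= M - 1) by (apply Rle_trans with (Rmin (M-1) t0); [apply Rmin_l | apply Rmin_l]).
assert (tt0 : t <= t0) by (apply Rle_trans with (Rmin (M-1) t0); [apply Rmin_l | apply Rmin_r]).
assert (t0' : t <= 0) by (apply Rle_trans with (Rmin 0 (-A)); [apply Rmin_r | apply Rmin_l]).
assert (tA : t <= -A) by (apply Rle_trans with (Rmin 0 (-A)); [apply Rmin_r | apply Rmin_r]).
assert (cpos : 0 < c) by (unfold c; lra).
assert (Hexp : 1 + A <= exp (-t)) by (pose proof (exp_ineq1_le (-t)); lra).
assert (HcA : c * A / n = Rabs H0 + 1) by (unfold A; field; lra).
assert (Hb : Rabs H0 + 1 < c * exp (-t) / n).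
{ rewrite <- HcA. unfold Rdiv. apply Rmult_lt_compat_r. apply Rinv_0_lt_compat; lra.
  apply Rmult_lt_compat_l; lra. }
assert (Hid : exp t * z t = exp ((n-1)*t) * H t - c * exp (-t) / n).
{ unfold H. replace (exp t) with (exp ((n-1)*t) * exp (-(n-2)*t)) by (rewrite <- exp_plus; f_equal; ring).
  replace (exp (-t)) with (exp ((n-1)*t) * exp (-n*t)) by (rewrite <- exp_plus; f_equal; ring).
  field. lra. }
assert (He : 0 < exp ((n-1)*t) <= 1).
{ split. apply exp_pos. apply exp_le1. nra. }
assert (HHt := HH t tt0). fold H0 in HHt.
assert (exp ((n-1)*t) * H t <= Rabs H0).
{ apply Rle_trans with (exp ((n-1)*t) * H0). apply Rmult_le_compat_l; lra.
  pose proof (Rle_abs H0). pose proof (Rabs_pos H0). nra. }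
assert (HM' := HM t ltac:(lra)).
apply Rabs_def2 in HM'. lra.
Qed.


Lemma U_nonpos t0 : U t0 <= 0.
Proof.
destruct (Rle_or_lt (U t0) 0) as [h|h]; [exact h|exfalso].
set (c := U t0).
set (H := fun t => - (exp(2*t) * z t + c * exp(n*t) / n)).
assert (HH : forall t, t0 <= t -> H t0 <= H t).
{ intros t ht. apply (mono H (fun t => exp(n*t) * (U t - c))); auto.
  - intros x _. unfold H, U. ad.
    replace (exp (2*x)) with (exp (n*x) * exp (-(n-2)*x)) by (rewrite <- exp_plus; f_equal; ring).
    field. lra.
  - intros x hx. pose proof (U_mono t0 x (proj1 hx)). pose proof (exp_pos (n*x)).
    apply Rmult_le_pos; unfold c; lra. }
destruct Lp as [M HM].
set (H0 := H t0).
set (A := n * (Rabs H0 + 1) / c).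
set (t := Rmax (Rmax (M+1) t0) (Rmax 0 A)).
assert (tM : M + 1 <= t) by (apply Rle_trans with (Rmax (M+1) t0); [apply Rmax_l | apply Rmax_l]).
assert (tt0 : t0 <= t) by (apply Rle_trans with (Rmax (M+1) t0); [apply Rmax_r | apply Rmax_l]).
assert (t0' : 0 <= t) by (apply Rle_trans with (Rmax 0 A); [apply Rmax_l | apply Rmax_r]).
assert (tA : A <= t) by (apply Rle_trans with (Rmax 0 A); [apply Rmax_r | apply Rmax_r]).
assert (cpos : 0 < c) by (unfold c; lra).
assert (Hexp : 1 + A <= exp ((n-1)*t)) by (pose proof (exp_ineq1_le ((n-1)*t)); nra).
assert (HcA : c * A / n = Rabs H0 + 1) by (unfold A; field; lra).
assert (Hb : Rabs H0 + 1 < c * exp ((n-1)*t) / n).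
{ rewrite <- HcA. unfold Rdiv. apply Rmult_lt_compat_r. apply Rinv_0_lt_compat; lra.
  apply Rmult_lt_compat_l; lra. }
assert (Hid : exp t * z t = - exp (-t) * H t - c * exp ((n-1)*t) / n).
{ unfold H. replace (exp t) with (exp (-t) * exp (2*t)) by (rewrite <- exp_plus; f_equal; ring).
  replace (exp ((n-1)*t)) with (exp (-t) * exp (n*t)) by (rewrite <- exp_plus; f_equal; ring).
  field. lra. }
assert (He : 0 < exp (-t) <= 1).
{ split. apply exp_pos. apply exp_le1. lra. }
assert (HHt := HH t tt0). fold H0 in HHt.
assert (- exp (-t) * H t <= Rabs H0).
{ apply Rle_trans with (- exp (-t) * H0). nra.
  pose proof (Rle_abs (-H0)). rewrite Rabs_Ropp in H1. pose proof (Rabs_pos H0). nra. }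
assert (HM' := HM t ltac:(lra)).
apply Rabs_def2 in HM'. lra.
Qed.

Lemma z_nonneg t : 0 <= z t.
Proof.
pose proof (W_nonneg t). pose proof (U_nonpos t). unfold W, U in *.
assert (Hid : n * exp (2*t) * z t = exp(2*t) * (- Derive z t + (n-2) * z t) - exp (n*t) * (- exp(-(n-2)*t) * (Derive z t + 2 * z t))).
{ replace (exp (2*t)) with (exp (n*t) * exp (-(n-2)*t)) by (rewrite <- exp_plus; f_equal; ring). ring. }
pose proof (exp_pos (n*t)). pose proof (exp_pos (2*t)).
assert (0 <= exp (n*t) * (- exp(-(n-2)*t) * (Derive z t + 2 * z t)) <= 0 -> True) by auto.
assert (0 <= n * exp (2*t) * z t) by nra.
assert (0 < n * exp (2*t)) by nra. nra.
Qed.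

Lemma z1_bound t : Rabs (Derive z t) <= 2 * z t.
Proof.
pose proof (W_nonneg t). pose proof (U_nonpos t). pose proof (z_nonneg t). unfold W, U in *.
pose proof (exp_pos (2*t)). pose proof (exp_pos (-(n-2)*t)).
assert (- Derive z t + (n-2) * z t >= 0).
{ destruct (Rle_or_lt 0 (- Derive z t + (n-2) * z t)); [lra|]. nra. }
assert (Derive z t + 2 * z t >= 0).
{ destruct (Rle_or_lt 0 (Derive z t + 2 * z t)); [lra|]. nra. }
apply Rabs_le. nra.
Qed.

Lemma V_anti s t : s <= t -> V t <= V s.
Proof.
intros h. cut (- V s <= - V t); [lra|].
apply (mono (fun r => - V r) (fun r => exp(-(n-2)*r) * ((n-2) * z r - Derive z r))); auto.
- intros x _. unfold V. ad. ring.
- intros x _. pose proof (W_nonneg x). unfold W in *. pose proof (exp_pos (2*x)).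
  pose proof (exp_pos (-(n-2)*x)).
  assert (0 <= - Derive z x + (n-2) * z x).
  { destruct (Rle_or_lt 0 (- Derive z x + (n-2) * z x)); [lra|]. nra. }
  nra.
Qed.

Lemma V_nonneg t : 0 <= V t.
Proof. unfold V. pose proof (z_nonneg t). pose proof (exp_pos (-(n-2)*t)). nra. Qed.

Lemma exp_le x y : x <= y -> exp x <= exp y.
Proof. intros h. destruct (Rle_lt_or_eq_dec _ _ h) as [h'|h'].
 left; apply exp_increasing; auto. rewrite h'; lra. Qed.

Lemma W_lower t : (1 - exp (-2)) / 4 * exp((2*n-2)*t) * V t ^2 <= W t.
Proof.
set (G := fun s => exp(2*s) * (- Derive z s + (n-2) * z s) - V t ^2 * exp((2*n-2)*s) / 4).
assert (HG : G (t-1) <= G t).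
{ apply (mono G (fun s => exp(2*s) * ((n-1)/2 * z s^2) - V t ^2 * (2*n-2) / 4 * exp((2*n-2)*s))).
  lra.
  - intros x _. unfold G. ad. clearbody V. field.
  - intros x hx. 
    assert (E1 : exp (2*x) * z x ^2 = exp((2*n-2)*x) * V x ^2).
    { unfold V. replace (exp (2*x)) with (exp((2*n-2)*x) * (exp (-(n-2)*x) * exp (-(n-2)*x)))
        by (rewrite <- !exp_plus; f_equal; ring). ring. }
    pose proof (V_anti x t (proj2 hx)). pose proof (V_nonneg t). pose proof (exp_pos ((2*n-2)*x)).
    assert (V t ^2 <= V x ^2) by nra.
    assert (Eq : exp (2*x) * ((n-1)/2 * z x^2) = (n-1)/2 * (exp((2*n-2)*x) * V x ^2)) by (rewrite <- E1; clearbody V; field).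
    rewrite Eq. assert (0 <= (n-1)/2 * exp((2*n-2)*x) * (V x ^2 - V t ^2)).
    { apply Rmult_le_pos; [|lra]. apply Rmult_le_pos; lra. }
    lra. }
unfold G in HG. fold (W (t-1)) in HG. fold (W t) in HG.
pose proof (W_nonneg (t-1)).
assert (E2 : exp ((2*n-2)*(t-1)) = exp((2*n-2)*t) * exp (-(2*n-2))) by (rewrite <- exp_plus; f_equal; ring).
assert (exp (-(2*n-2)) <= exp (-2)) by (apply exp_le; lra).
pose proof (exp_pos ((2*n-2)*t)). assert (0 <= V t ^2) by apply pow2_ge_0.
rewrite E2 in HG.
assert (V t ^ 2 * (exp ((2 * n - 2) * t) * exp (- (2 * n - 2))) <= V t ^ 2 * (exp ((2 * n - 2) * t) * exp (-2))).
{ apply Rmult_le_compat_l; auto. apply Rmult_le_compat_l; lra. }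
nra.
Qed.

Lemma riccati t : exp(-(n-2)*t) * (Derive z t - (n-2) * z t) <= - ((1 - exp (-2)) / 4) * exp ((n-2)*t) * V t ^2.
Proof.
pose proof (W_lower t). unfold W in H.
assert (E1 : exp(-(n-2)*t) * (Derive z t - (n-2) * z t) = - exp (-n*t) * (exp(2*t) * (- Derive z t + (n-2) * z t)))
  by (replace (exp (-(n-2)*t)) with (exp (-n*t) * exp (2*t)) by (rewrite <- exp_plus; f_equal; ring); ring).
assert (E2 : exp ((n-2)*t) = exp (-n*t) * exp ((2*n-2)*t)) by (rewrite <- exp_plus; f_equal; ring).
rewrite E1, E2. pose proof (exp_pos (-n*t)). nra.
Qed.
End S.

Lemma ric (V dV g Gp : R -> R) k s t : s <= t ->
  (forall r, is_derive V r (dV r)) -> (forall r, is_derive Gp r (g r)) ->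
  (forall r, dV r <= - k * g r * V r ^ 2) -> (forall r, s <= r <= t -> 0 < V r) ->
  k * (Gp t - Gp s) <= / V t - / V s.
Proof.
intros hst hV hG hr hp.
assert (h : (fun r => / V r - k * Gp r) s <= (fun r => / V r - k * Gp r) t).
{ apply (mono (fun r => / V r - k * Gp r) (fun r => - dV r / V r ^ 2 - k * g r) s t); auto.
  - intros x hx. specialize (hp x hx). auto_derive.
    + repeat split. eexists; apply hV. lra. eexists; apply hG.
    + change (fun x0 => V x0) with V; change (fun x0 => Gp x0) with Gp.
      rewrite (is_derive_unique _ _ _ (hV x)), (is_derive_unique _ _ _ (hG x)). field. lra.
  - intros x hx. specialize (hp x hx). specialize (hr x).
    assert (0 < V x ^ 2) by (apply pow_lt; lra).
    assert (k * g x <= - dV x / V x ^ 2).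
    { assert (e1 : k * g x = (k * g x * V x^2) * / V x^2) by (field; lra).
      assert (e2 : - dV x / V x ^ 2 = (- dV x) * / V x ^ 2) by (field; lra).
      rewrite e1, e2. apply Rmult_le_compat_r. left; apply Rinv_0_lt_compat; auto. lra. }
    lra. }
simpl in h. lra.
Qed.

Theorem theorem3p7 (N : nat) (HN : N = 2%nat \/ N = 3%nat) (z : R -> R)
  (Hz : C2 z)
  (Heq : forall t : R,
      - Derive (Derive z) t + (INR N - 4) * Derive z t + (2 * INR N - 4) * z t
      = (INR N - 1) / 2 * (z t) ^ 2)
  (Hlim_minus : is_lim (fun t => exp t * z t) m_infty 0)
  (Hlim_plus : is_lim (fun t => exp t * z t) p_infty 0) :
  forall t : R, z t = 0.
Proof.
destruct Hz as [Hz1 [Hz2 _]].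
assert (dz : forall t, is_derive z t (Derive z t)) by (intro t; apply Derive_correct, Hz1).
assert (dz1 : forall t, is_derive (Derive z) t (Derive (Derive z) t)) by (intro t; apply Derive_correct, Hz2).
set (n := INR N) in *.
assert (Hn' : n = 2 \/ n = 3) by (destruct HN; subst; unfold n; simpl; lra).
assert (E : forall t, Derive (Derive z) t = (n-4) * Derive z t + (2*n-4) * z t - (n-1)/2 * z t ^2)
  by (intro t; specialize (Heq t); lra).
assert (Lm' : forall eps, 0 < eps -> exists M, forall t, t < M -> Rabs (exp t * z t) < eps).
{ intros eps he. apply is_lim_spec in Hlim_minus. destruct (Hlim_minus (mkposreal eps he)) as [M HM].
  exists M. intros t ht. specialize (HM t ht). simpl in HM. rewrite Rminus_0_r in HM. exact HM. }
assert (Lp' : forall eps, 0 < eps -> exists M, forall t, M < t -> Rabs (exp t * z t) < eps).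
{ intros eps he. apply is_lim_spec in Hlim_plus. destruct (Hlim_plus (mkposreal eps he)) as [M HM].
  exists M. intros t ht. specialize (HM t ht). simpl in HM. rewrite Rminus_0_r in HM. exact HM. }
pose proof (Lm' 1 Rlt_0_1) as Lm. pose proof (Lp' 1 Rlt_0_1) as Lp.
assert (Hnb : 2 <= n <= 3) by lra.
pose proof (z_nonneg z n dz dz1 E Hnb Lm Lp) as z0.
set (k := (1 - exp (-2)) / 4).
assert (kpos : 0 < k).
{ unfold k. assert (exp (-2) < 1) by (rewrite <- exp_0; apply exp_increasing; lra). lra. }
set (V := fun r => exp(-(n-2)*r) * z r).
assert (dVr : forall r, is_derive V r (exp(-(n-2)*r) * (Derive z r - (n-2) * z r))).
{ intro r. unfold V. eapply dV; eauto. }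
assert (Vanti : forall s t, s <= t -> V t <= V s).
{ intros s t h. unfold V. eapply V_anti; eauto. }
assert (Vnn : forall t, 0 <= V t).
{ intros t. unfold V. pose proof (exp_pos (-(n-2)*t)). pose proof (z0 t). nra. }
assert (Ric : forall r, exp(-(n-2)*r) * (Derive z r - (n-2) * z r) <= - k * exp ((n-2)*r) * V r ^2).
{ intros r. unfold V. eapply riccati; eauto. }
destruct Hn' as [H2|H3].
- intros t. destruct (Rle_lt_or_eq_dec _ _ (z0 t)) as [zp|zq]; [exfalso | auto].
  assert (Vt : 0 < V t) by (unfold V; pose proof (exp_pos (-(n-2)*t)); nra).
  assert (iV : 0 < / V t) by (apply Rinv_0_lt_compat; auto).
  set (s := t - (/ V t) / k - 1).
  assert (hs : s <= t).
  { unfold s. assert (0 < / V t / k) by (apply Rdiv_lt_0_compat; auto). lra. }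
  assert (pos : forall r, s <= r <= t -> 0 < V r).
  { intros r hr. pose proof (Vanti r t (proj2 hr)). lra. }
  pose proof (ric V (fun r => exp(-(n-2)*r) * (Derive z r - (n-2) * z r)) (fun _ => 1) (fun r => r) k s t hs dVr
    ltac:(intro r; auto_derive; auto; ring)
    ltac:(intro r; pose proof (Ric r) as hh; replace ((n-2)*r) with 0 in hh by (rewrite H2; ring); rewrite exp_0 in hh; lra)
    pos) as hr.
  simpl in hr.
  assert (0 < / V s) by (apply Rinv_0_lt_compat; apply pos; lra).
  assert (k * (t - s) = / V t + k) by (unfold s; field; lra).
  lra.
- set (c1 := k * (1 - exp (-1))).
  assert (c1pos : 0 < c1).
  { unfold c1. assert (exp (-1) < 1) by (rewrite <- exp_0; apply exp_increasing; lra). nra. }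
  assert (zB : forall t, z t <= / c1).
  { intros t. destruct (Rle_lt_or_eq_dec _ _ (z0 t)) as [zp|zq];
      [| rewrite <- zq; left; apply Rinv_0_lt_compat; auto].
    assert (Vt : 0 < V t) by (unfold V; pose proof (exp_pos (-(n-2)*t)); nra).
    assert (iV : 0 < / V t) by (apply Rinv_0_lt_compat; auto).
    assert (pos : forall r, t - 1 <= r <= t -> 0 < V r).
    { intros r hr. pose proof (Vanti r t (proj2 hr)). lra. }
    pose proof (ric V (fun r => exp(-(n-2)*r) * (Derive z r - (n-2) * z r)) (fun r => exp ((n-2)*r)) (fun r => exp ((n-2)*r)) k (t-1) t
      ltac:(lra) dVr
      ltac:(intro r; auto_derive; auto; rewrite H3; ring)
      Ric pos) as hr.
    simpl in hr.
    assert (0 < / V (t-1)) by (apply Rinv_0_lt_compat; apply pos; lra).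
    assert (e1 : exp ((n-2)*t) = exp t) by (rewrite H3; f_equal; ring).
    assert (e2 : exp ((n-2)*(t-1)) = exp t * exp (-1)) by (rewrite <- exp_plus; rewrite H3; f_equal; ring).
    assert (zt : z t = exp t * V t).
    { unfold V. rewrite H3. rewrite <- Rmult_assoc, <- exp_plus.
      replace (t + - (3 - 2) * t) with 0 by ring. rewrite exp_0. ring. }
    rewrite e1, e2 in hr.
    assert (h1 : c1 * exp t < / V t) by (unfold c1; nra).
    assert (h2 : c1 * exp t * V t < 1).
    { apply Rmult_lt_compat_r with (r := V t) in h1; auto. rewrite Rinv_l in h1; lra. }
    assert (h3 : z t * c1 < 1) by (rewrite zt; nra).
    apply Rmult_lt_compat_r with (r := / c1) in h3; [|apply Rinv_0_lt_compat; auto].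
    rewrite Rmult_assoc, Rinv_r, Rmult_1_r, Rmult_1_l in h3 by lra. lra. }
  set (B := / c1) in *.
  assert (Bpos : 0 < B) by (apply Rinv_0_lt_compat; auto).
  pose proof (z1_bound z n dz dz1 E Hnb Lm Lp) as zb.
  set (Q := fun t => exp t * (3 * Derive z t ^ 2 + 2 * z t * Derive z t - 6 * z t ^ 2 + 2 * z t ^ 3)).
  set (K := (22 + 2*B)*B + 1).
  assert (Kpos : 0 < K) by (unfold K; nra).
  assert (Qb : forall t, Rabs (Q t) <= K * (exp t * z t)).
  { intros t. unfold Q.
    assert (hx : 0 <= z t <= B) by (split; [apply z0|apply zB]).
    assert (ha : - (2 * z t) <= Derive z t <= 2 * z t).
    { pose proof (zb t) as hb. unfold Rabs in hb. destruct (Rcase_abs (Derive z t)); lra. }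
    set (a := Derive z t) in *. set (x := z t) in *.
    assert (h1 : a ^ 2 <= 4 * x ^ 2) by nra.
    assert (h2 : x * a <= 2 * x ^ 2) by nra.
    assert (h3 : - (2 * x ^ 2) <= x * a) by nra.
    assert (h4 : 0 <= x ^ 3 <= B * x ^ 2) by (split; nra).
    assert (h5 : x ^ 2 <= B * x) by nra.
    assert (h6 : 0 <= a ^ 2) by nra.
    assert (hI : Rabs (3 * a ^ 2 + 2 * x * a - 6 * x ^ 2 + 2 * x ^ 3) <= (16 + 2 * B) * x ^ 2).
    { apply Rabs_le. split; nra. }
    rewrite Rabs_mult, (Rabs_pos_eq (exp t)) by (left; apply exp_pos).
    pose proof (exp_pos t).
    assert ((16 + 2 * B) * x ^ 2 <= K * x) by (unfold K; nra).
    nra. }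
  assert (Qanti : forall a b, a <= b -> Q b <= Q a).
  { intros a b hab.
    assert (h : (fun t => -1 * Q t) a <= (fun t => -1 * Q t) b).
    { apply (mono (fun t => -1 * Q t) (fun t => -1 * (- exp t * (Derive z t ^ 2 + 2 * z t ^ 2))) a b hab).
      - intros x _. apply is_derive_scal. unfold Q. exact (dQ z n dz dz1 E x H3).
      - intros x _. pose proof (exp_pos x). nra. }
    simpl in h. lra. }
  assert (Q0 : forall t, Q t = 0).
  { intros t. destruct (Rtotal_order (Q t) 0) as [hq|[hq|hq]]; auto; exfalso.
    - destruct (Lp' (- Q t / K) ltac:(apply Rdiv_lt_0_compat; lra)) as [M HM].
      set (x := Rmax (M+1) t).
      assert (hx1 : M + 1 <= x) by apply Rmax_l. assert (hx2 : t <= x) by apply Rmax_r.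
      pose proof (HM x ltac:(lra)) as h. pose proof (Qanti t x hx2). pose proof (Qb x).
      assert (K * Rabs (exp x * z x) < K * (- Q t / K)) by (apply Rmult_lt_compat_l; auto).
      assert (K * (- Q t / K) = - Q t) by (field; lra).
      pose proof (Rle_abs (exp x * z x)). pose proof (proj1 (Rabs_le_between _ _) (Qb x)) as hh.
      nra.
    - destruct (Lm' (Q t / K) ltac:(apply Rdiv_lt_0_compat; lra)) as [M HM].
      set (x := Rmin (M-1) t).
      assert (hx1 : x <= M - 1) by apply Rmin_l. assert (hx2 : x <= t) by apply Rmin_r.
      pose proof (HM x ltac:(lra)) as h. pose proof (Qanti x t hx2). pose proof (Qb x).
      assert (K * Rabs (exp x * z x) < K * (Q t / K)) by (apply Rmult_lt_compat_l; auto).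
      assert (K * (Q t / K) = Q t) by (field; lra).
      pose proof (Rle_abs (exp x * z x)). pose proof (proj1 (Rabs_le_between _ _) (Qb x)) as hh.
      nra. }
  intros t.
  pose proof (is_derive_unique _ _ _ (dQ z n dz dz1 E t H3)) as hd.
  change (Derive Q t = - exp t * (Derive z t ^ 2 + 2 * z t ^ 2)) in hd.
  rewrite (Derive_ext Q (fun _ => 0) t Q0), Derive_const in hd.
  pose proof (exp_pos t).
  assert (Derive z t ^ 2 + 2 * z t ^ 2 = 0) by nra.
  nra.
Qed.
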